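(* Let $W$ be a finite set of possible worlds and let $\bullet$ be an operator assigning to every pair $(G_1,G_2)$ of belief algebras on $W$ a belief algebra $G_1\bullet G_2$, satisfying the postulates (RA1)–(RA4) described in the context. Let $G_1=(2^W,\gg_1)$ and $G_2=(2^W,\gg_2)$ be complete belief algebras, and let $$\Lambda(G_1,G_2)=\{(\{\omega\},\{\omega'\})\mid \{\omega\}\gg_1\{\omega'\},\ I_2(\{\omega\})=I_2(\{\omega'\})\},$$ where $I_2$ denotes the support with respect to the backbone of $G_2$. Then $G_1\bullet G_2=\operatorname{Gen}(\Lambda(G_1,G_2)\cup G_2)$, and the result of revising $G_1$ by $G_2$ is unique.
   Context: $W$ is a finite nonempty set. Let $R_W=\{(U,V)\mid U,V\subseteq W,\ U\cap V=\varnothing\}$. A belief algebra on $W$ is a pair $(2^W,\gg)$, where $\gg$ is a binary relation on $2^W$ satisfying, for all $U,V,U_1,V_1,U_2,V_2\subseteq W$: (A0) $\gg\subseteq R_W$; (A1) $U\gg\varnothing$ iff $U\neq\varnothing$; (A2) if $U\gg V$ then not $V\gg U$; (A3) if $U_1\supseteq U$, $U\gg V$, $V\supseteq V_1$ and $U_1\cap V_1=\varnothing$, then $U_1\gg V_1$; (A4) if $U=U_1\cup V_1=U_2\cup V_2$, $U_1\gg V_1$ and $U_2\gg V_2$, then $U_1\cap U_2\gg V_1\cup V_2$. A belief algebra is identified with its relation $\gg$ viewed as a set of pairs; $(U,V)\in G$ means $U\gg V$, and $\subseteq,\cup,\cap$ refer to these sets of pairs. For $\Omega\subseteq R_W$,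 $\operatorname{Gen}(\Omega)$ is the smallest subset of $R_W$ containing $\Omega$ and closed under: (i) it contains $(U,\varnothing)$ for every nonempty $U\subseteq W$; (ii) if $(U,V)$ is in it, $U\subseteq U_1$, $V_1\subseteq V$, $U_1\cap V_1=\varnothing$, then $(U_1,V_1)$ is in it; (iii) if $U_1\cup V_1=U_2\cup V_2$ and $(U_1,V_1),(U_2,V_2)$ are in it, then $(U_1\cap U_2,V_1\cup V_2)$ is in it. For a total preorder $\preceq$ on $W$ (with $\omega\prec\omega'$ iff $\omega\preceq\omega'$ and not $\omega'\preceq\omega$), the relation $U\gg V$ iff $U\cap V=\varnothing$ and there is $\omega_1\in U$ with $\omega_1\prec\omega_2$ for all $\omega_2\in V$ is a belief algebra; those arising this way are complete belief algebras (CBAs). Every belief algebra $(2^W,\gg)$ has a unique backbone: a sequence $U_1,\dots,U_n$ of nonempty pairwise disjoint sets with union $W$, with $U_i\gg U_{i+1}$ for $i<n$, such that for each $i$ any two disjoint nonempty subsets of $U_i$ are incomparable under $\gg$. For nonempty $V\subseteq W$, its support $I(V)$ is $U_i$ for the least $i$ with $V\cap U_i\neq\varnothing$. Postulates (for all belief algebras $G_1=(2^W,\gg_1)$, $G_2=(2^W,\gg_2)$): (RA1) $G_2\subseteq G_1\bullet G_2$. (RA2) There is $\Omega\subseteq G_1\cup G_2$ with $G_1\bullet G_2=\operatorname{Gen}(\Omega)$. (RA3) If $G_1,G_2$ are CBAs, then $G_1\bullet G_2$ is a CBA. (RA4) If $G_1,G_2$ are CBAs and $I_2(\{\omega\})=I_2(\{\omega'\})$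 (support w.r.t. the backbone of $G_2$), then $(\{\omega\},\{\omega'\})\in G_1\bullet G_2$ iff $\{\omega\}\gg_1\{\omega'\}$. *)

(* Defs.v *)
From mathcomp Require Import all_boot.
From Stdlib Require Import ClassicalEpsilon.
Set Implicit Arguments. Unset Strict Implicit. Unset Printing Implicit Defensive.

Section BeliefAlgebra.
Variable W : finType.

(* A binary relation on 2^W, viewed as a set of pairs (U,V); (U,V) \in G means U >> V. *)
Definition brel := {set ({set W} * {set W})}.

Definition belief_algebra (G : brel) : Prop :=
  (forall U V : {set W}, (U, V) \in G -> [disjoint U & V]) /\
  (forall U : {set W}, (U, set0) \in G <-> U != set0) /\
  (forall U V : {set W}, (U, V) \in G -> (V, U) \notin G) /\
  (forall U V U1 V1 : {set W}, U \subset U1 -> (U, V) \in G ->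
               V1 \subset V -> [disjoint U1 & V1] -> (U1, V1) \in G) /\
  (forall U U1 V1 U2 V2 : {set W}, U = U1 :|: V1 -> U = U2 :|: V2 ->
               (U1, V1) \in G -> (U2, V2) \in G -> (U1 :&: U2, V1 :|: V2) \in G).

Definition gen_closed (S : brel) : bool :=
  [forall U : {set W}, (U != set0) ==> ((U, set0) \in S)] &&
  [forall p in S, forall U1 : {set W}, forall V1 : {set W},
     [&& p.1 \subset U1, V1 \subset p.2 & [disjoint U1 & V1]] ==> ((U1, V1) \in S)] &&
  [forall p in S, forall q in S,
     (p.1 :|: p.2 == q.1 :|: q.2) ==> ((p.1 :&: q.1, p.2 :|: q.2) \in S)].

Definition Gen (Om : brel) : brel :=
  [set p | [forall S : brel, (gen_closed S && (Om \subset S)) ==> (p \in S)]].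

Definition CBA (G : brel) : Prop :=
  exists le : rel W, total le /\ transitive le /\
    G = [set p : {set W} * {set W} | [disjoint p.1 & p.2] &&
           [exists w1 in p.1, forall w2 in p.2, le w1 w2 && ~~ le w2 w1]].

Definition is_backbone (G : brel) (bb : seq {set W}) : Prop :=
  (forall i, i < size bb -> nth set0 bb i != set0) /\
  (forall i j, i < j -> j < size bb -> [disjoint nth set0 bb i & nth set0 bb j]) /\
  (\bigcup_(U <- bb) U = [set: W]) /\
  (forall i, i.+1 < size bb -> (nth set0 bb i, nth set0 bb i.+1) \in G) /\
  (forall i, i < size bb -> forall X Y : {set W},
      X \subset nth set0 bb i -> Y \subset nth set0 bb i ->
      X != set0 -> Y != set0 -> [disjoint X & Y] -> (X, Y) \notin G).

(* The (unique, by the paper) backbone, chosen by classical choice. *)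
Definition backbone (G : brel) : seq {set W} :=
  epsilon (inhabits [::]) (is_backbone G).

Definition supp (G : brel) (V : {set W}) : {set W} :=
  let bb := backbone G in nth set0 bb (find (fun U => U :&: V != set0) bb).

Definition Lambda (G1 G2 : brel) : brel :=
  [set p | [exists w : W, exists w' : W,
     [&& p == ([set w], [set w']), ([set w], [set w']) \in G1 &
         supp G2 [set w] == supp G2 [set w']]]].

End BeliefAlgebra.

(* Main.v *)
Require Import Defs.
From mathcomp Require Import all_boot.
From mathcomp Require Import zify.
From Stdlib Require Import ClassicalEpsilon.
Set Implicit Arguments. Unset Strict Implicit. Unset Printing Implicit Defensive.

Section Aux.
Variable W : finType.

Definition cba_of (le : rel W) : brel W :=
  [set p : {set W} * {set W} | [disjoint p.1 & p.2] &&
           [exists w1 in p.1, forall w2 in p.2, le w1 w2 && ~~ le w2 w1]].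

Lemma disjP (A B : {set W}) :
  reflect (forall x, x \in A -> x \in B -> False) [disjoint A & B].
Proof.
rewrite -setI_eq0; apply: (iffP eqP) => [E x xA xB | H].
  have : x \in A :&: B by rewrite inE xA xB.
  by rewrite E inE.
apply/setP => x; rewrite !inE; apply/negP => /andP [xA xB]; exact: H x xA xB.
Qed.

Lemma set1_nz (x : W) : [set x] != set0.
Proof. by apply/set0Pn; exists x; rewrite inE. Qed.

Lemma mem_cba1 (le : rel W) a b :
  (([set a],[set b]) \in cba_of le) = le a b && ~~ le b a.
Proof.
rewrite inE /= disjoints1 in_set1.
apply/andP/idP.
- case=> _ /existsP [x /andP [/set1P -> /forallP H]].
  by move: (H b); rewrite in_set1 eqxx.
- move=> H; split.
  + apply/eqP => E; move: H; rewrite E. by case: (le b b).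
  + apply/existsP; exists a; rewrite in_set1 eqxx /=; apply/forallP => y.
    by apply/implyP => /set1P ->.
Qed.

Lemma a4_core (le : rel W) (tr : transitive le) (U1 V1 U2 V2 : {set W}) a1 a2 :
  a1 \in U1 -> a1 \in U2 :|: V2 -> le a1 a2 ->
  (forall y, y \in V1 -> le a1 y && ~~ le y a1) ->
  (forall y, y \in V2 -> le a2 y && ~~ le y a2) ->
  [exists w1 in U1 :&: U2, forall w2 in V1 :|: V2, le w1 w2 && ~~ le w2 w1].
Proof.
move=> a1U1 a1U h12 H1 H2. apply/existsP; exists a1.
have a1U2 : a1 \in U2.
  move: a1U; rewrite inE => /orP [//|a1V2].
  by have := H2 _ a1V2; rewrite h12 andbF.
rewrite inE a1U1 a1U2 /=. apply/forallP => y; apply/implyP; rewrite inE => /orP [yV|yV].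
  exact: H1.
have /andP [l2y nly2] := H2 _ yV. rewrite (tr _ _ _ h12 l2y) /=.
apply/negP => ly1. by rewrite (tr _ _ _ ly1 h12) in nly2.
Qed.

Lemma cba_ba le : total le -> transitive le -> belief_algebra (cba_of le).
Proof.
move=> tot tr.
split; [|split; [|split; [|split]]].
- by move=> U V; rewrite inE => /andP[].
- move=> U; rewrite inE /=; split.
  + case/andP=> _ /existsP [x /andP [xU _]]; apply/set0Pn; by exists x.
  + case/set0Pn => x xU; apply/andP; split.
      by apply/disjP => y _; rewrite inE.
    apply/existsP; exists x; rewrite xU /=; apply/forallP => y; by rewrite inE.
- move=> U V; rewrite !inE /= => /andP [_ /existsP [a /andP [aU /forallP Ha]]].
  apply/negP => /andP [_ /existsP [b /andP [bV /forallP Hb]]].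
  move: (Ha b) (Hb a); rewrite aU bV /= => /andP[h1 h2] /andP[h3 h4].
  by rewrite h1 in h4.
- move=> U V U1 V1 sU; rewrite !inE /= => /andP [_ /existsP [a /andP [aU /forallP Ha]]] sV dis.
  rewrite dis /=; apply/existsP; exists a; rewrite (subsetP sU _ aU) /=.
  apply/forallP => y; apply/implyP => yV1; exact: (implyP (Ha y) (subsetP sV _ yV1)).
- move=> U U1 V1 U2 V2 E1 E2; rewrite !inE /=.
  move=> /andP [d1 /existsP [a1 /andP [a1U /forallP H1]]].
  move=> /andP [d2 /existsP [a2 /andP [a2U /forallP H2]]].
  apply/andP; split.
    apply/disjP => x /setIP [x1 x2] /setUP [xv|xv].
      by move/disjP: d1 => /(_ x x1 xv).
    by move/disjP: d2 => /(_ x x2 xv).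
  have H1' : forall y, y \in V1 -> le a1 y && ~~ le y a1 by move=> y; apply/implyP.
  have H2' : forall y, y \in V2 -> le a2 y && ~~ le y a2 by move=> y; apply/implyP.
  case/orP: (tot a1 a2) => h.
    apply: (a4_core tr a1U _ h H1' H2'). by rewrite -E2 E1 inE a1U.
  rewrite setIC setUC.
  apply: (a4_core tr a2U _ h H2' H1'). by rewrite -E1 E2 inE a2U.
Qed.

Lemma ba_closed (S : brel W) : belief_algebra S -> gen_closed S.
Proof.
case=> [A0 [A1 [A2 [A3 A4]]]]. rewrite /gen_closed; apply/andP; split; [apply/andP; split|].
- apply/forallP => U; apply/implyP => hU; exact/A1.
- apply/forall_inP => p pS; apply/forallP => U1; apply/forallP => V1.
  apply/implyP => /and3P [h1 h2 h3].
  case: p pS h1 h2 => a b /= pS h1 h2. exact: A3 h1 pS h2 h3.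
- apply/forall_inP => p pS; apply/forall_inP => q qS; apply/implyP => /eqP E.
  case: p pS E => a b pS; case: q qS => c d qS /= E.
  exact: (A4 (a :|: b) a b c d erefl E pS qS).
Qed.

Lemma GenP (Om : brel W) p :
  reflect (forall S, gen_closed S -> Om \subset S -> p \in S) (p \in Gen Om).
Proof.
rewrite inE; apply: (iffP forallP) => H S.
  move=> gS oS; exact: (implyP (H S) (introT andP (conj gS oS))).
apply/implyP => /andP [gS oS]; exact: H.
Qed.

Lemma Gen_min (Om S : brel W) : gen_closed S -> Om \subset S -> Gen Om \subset S.
Proof. move=> gS oS; apply/subsetP => p /GenP; by apply. Qed.

Lemma Gen_base (Om : brel W) p : p \in Om -> p \in Gen Om.
Proof. move=> pO; apply/GenP => S _ /subsetP; by apply. Qed.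

Lemma Gen_i (Om : brel W) (U : {set W}) : U != set0 -> (U, set0) \in Gen Om.
Proof.
move=> hU; apply/GenP => S /andP [/andP [c1 _] _] _; exact: (implyP (forallP c1 U) hU).
Qed.

Lemma Gen_ii (Om : brel W) (U V U1 V1 : {set W}) : (U,V) \in Gen Om ->
  U \subset U1 -> V1 \subset V -> [disjoint U1 & V1] -> (U1,V1) \in Gen Om.
Proof.
move=> /GenP H sU sV d; apply/GenP => S gS oS.
have pS := H S gS oS; move: gS => /andP [/andP [_ c2] _].
have := forall_inP c2 (U,V) pS => /forallP/(_ U1)/forallP/(_ V1)/implyP; apply.
by rewrite /= sU sV d.
Qed.

Lemma Gen_iii (Om : brel W) (U1 V1 U2 V2 : {set W}) : (U1,V1) \in Gen Om ->
  (U2,V2) \in Gen Om -> U1 :|: V1 = U2 :|: V2 -> (U1 :&: U2, V1 :|: V2) \in Gen Om.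
Proof.
move=> /GenP H1 /GenP H2 E; apply/GenP => S gS oS.
have p1 := H1 S gS oS; have p2 := H2 S gS oS; move: gS => /andP [_ c3].
have := forall_inP c3 (U1,V1) p1 => /forall_inP/(_ (U2,V2) p2)/implyP; apply.
by rewrite /= E.
Qed.

Lemma gen_combine (Om : brel W) w1 (V : {set W}) : w1 \notin V ->
  (forall w2, w2 \in V -> ([set w1],[set w2]) \in Gen Om) -> ([set w1], V) \in Gen Om.
Proof.
move=> nV H.
suff: forall s : seq W, {subset s <= V} -> ([set w1], [set x in s]) \in Gen Om.
  move=> h; have E : [set x in enum V] = V by apply/setP => x; rewrite inE mem_enum.
  rewrite -E; apply: h => x; by rewrite mem_enum.
elim => [|b s IHs] hs.
  have -> : [set x in [::]] = set0 :> {set W} by apply/setP=> x; rewrite !inE.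
  exact/Gen_i/set1_nz.
have bV : b \in V by apply: hs; rewrite mem_head.
have P1 : ([set w1], [set x in s]) \in Gen Om.
  apply: IHs => x xs; apply: hs; by rewrite inE xs orbT.
have -> : [set x in b :: s] = b |: [set x in s] by apply/setP => x; rewrite !inE.
set V1 := [set x in s] in P1 *.
case: (boolP (b \in V1)) => bV1.
  have -> : b |: V1 = V1 by apply/setUidPr; rewrite sub1set.
  exact: P1.
have w1V1 : w1 \notin V1.
  apply/negP; rewrite inE => ws.
  have h' : w1 \in V by apply: hs; rewrite inE ws orbT.
  by rewrite h' in nV.
have nwb : b != w1 by apply/eqP => E; by rewrite -E bV in nV.
have P2 := H b bV.
have Q1 : ([set w1] :|: [set b], V1) \in Gen Om.
  apply: (Gen_ii P1); [exact: subsetUl | exact: subxx |].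
  apply/disjP => x; rewrite !inE => /orP [/eqP->|/eqP->] h.
    by move: w1V1; rewrite inE h.
  by move: bV1; rewrite inE h.
have Q2 : ([set w1] :|: V1, [set b]) \in Gen Om.
  apply: (Gen_ii P2); [exact: subsetUl | exact: subxx |].
  by rewrite disjoint_sym disjoints1 in_setU in_set1 negb_or nwb.
have := Gen_iii Q1 Q2 (setUAC _ _ _).
have -> : ([set w1] :|: [set b]) :&: ([set w1] :|: V1) = [set w1].
  apply/setP => x; rewrite !inE.
  case: (eqVneq x w1) => //= hx.
  by case: (eqVneq x b) => //= ->; move: bV1; rewrite inE => /negbTE.
by rewrite setUC.
Qed.

Definition is_bb_on (G : brel W) (A : {set W}) (bb : seq {set W}) : Prop :=
  (forall i, i < size bb -> nth set0 bb i != set0) /\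
  (forall i j, i < j -> j < size bb -> [disjoint nth set0 bb i & nth set0 bb j]) /\
  (\bigcup_(U <- bb) U = A) /\
  (forall i, i.+1 < size bb -> (nth set0 bb i, nth set0 bb i.+1) \in G) /\
  (forall i, i < size bb -> forall X Y : {set W},
      X \subset nth set0 bb i -> Y \subset nth set0 bb i ->
      X != set0 -> Y != set0 -> [disjoint X & Y] -> (X, Y) \notin G).

Lemma nth_sub_union (bb : seq {set W}) i : i < size bb ->
  nth set0 bb i \subset \bigcup_(U <- bb) U.
Proof.
move=> hi; rewrite bigcup_seq; apply: (bigcup_sup (nth set0 bb i)).
exact: mem_nth.
Qed.

Lemma exists_bb (le : rel W) : total le -> transitive le ->
  forall A : {set W}, exists bb, is_bb_on (cba_of le) A bb.
Proof.
move=> tot tr.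
have lerr : forall x, le x x by move=> x; have := tot x x; rewrite orbb.
suff: forall n (A : {set W}), #|A| <= n -> exists bb, is_bb_on (cba_of le) A bb.
  move=> H A; exact: (H #|A|).
elim => [|n IH] A hA.
  exists [::]; rewrite /is_bb_on big_nil /=.
  have -> : A = set0 by apply/cards0_eq; lia.
  by repeat split.
case: (set_0Vmem A) => [->|[m0 m0A]].
  by exists [::]; rewrite /is_bb_on big_nil /=; repeat split.
case: (@arg_minnP _ m0 (fun i => i \in A) (fun i => #|[set y | le y i]|) m0A) => m mA Hm.
have minm : forall a, a \in A -> le m a.
  move=> a aA; apply/negPn/negP => nma.
  have lam : le a m by have := tot m a; rewrite (negbTE nma).
  have : [set y | le y a] \proper [set y | le y m].
    apply/properP; split.
      apply/subsetP => y; rewrite !inE => h; exact: tr h lam.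
    by exists m; rewrite !inE ?lerr.
  move/proper_card; have := Hm a aA; lia.
set M := [set x in A | le x m].
set A' := A :\: M.
have mM : m \in M by rewrite inE mA lerr.
have hA' : #|A'| <= n.
  have : A' \proper A.
    apply/properP; split; first exact: subsetDl.
    by exists m => //; rewrite inE mM.
  move/proper_card; lia.
have [bb' [ne' [dj' [un' [cs' wb']]]]] := IH A' hA'.
have blk : forall j, j < size bb' -> nth set0 bb' j \subset A'.
  by move=> j hj; rewrite -un'; exact: nth_sub_union.
have djM : forall j, j < size bb' -> [disjoint M & nth set0 bb' j].
  move=> j hj; apply/disjP => x xM xB.
  by have := subsetP (blk j hj) x xB; rewrite inE xM.
exists (M :: bb'); split; [|split; [|split; [|split]]].
- move=> [|i] /= hi; last exact: ne' i hi.
  by apply/set0Pn; exists m.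
- move=> [|i] [|j] //= hij hj; first exact: djM.
  exact: dj' i j hij hj.
- rewrite big_cons un'; apply/setP => x; rewrite !inE.
  by case: (x \in A); case: (le x m).
- move=> [|i] /= hi; last exact: cs' i hi.
  rewrite inE /=; apply/andP; split; first exact: djM.
  apply/existsP; exists m; rewrite mM /=; apply/forallP => y; apply/implyP => yB.
  have := subsetP (blk 0 hi) y yB; rewrite !inE negb_and => /andP [/orP [nyA|nym] yA].
    by rewrite yA in nyA.
  by rewrite nym minm.
- move=> [|i] /= hi X Y sX sY nX nY dXY; last exact: wb' i hi X Y sX sY nX nY dXY.
  rewrite inE; apply/negP => /andP [_ /existsP [x /andP [xX /forallP Hx]]].
  case/set0Pn: nY => y yY.
  have := implyP (Hx y) yY => /andP [_ nyx].
  have := subsetP sY y yY; rewrite inE => /andP [_ lym].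
  have := subsetP sX x xX; rewrite inE => /andP [xA _].
  by rewrite (tr _ _ _ lym (minm x xA)) in nyx.
Qed.

Section BB.
Variables (le : rel W) (tot : total le) (tr : transitive le).
Variable bb : seq {set W}.
Hypothesis hb : is_backbone (cba_of le) bb.

Lemma bb_flat i x y : i < size bb -> x \in nth set0 bb i -> y \in nth set0 bb i -> le x y.
Proof.
move=> hi hx hy.
case: (eqVneq x y) => [->|nxy]; first by have := tot y y; rewrite orbb.
have [_ [_ [_ [_ wb]]]] := hb.
have h2 := wb i hi [set y] [set x]; rewrite !sub1set in h2.
have := h2 hy hx (set1_nz y) (set1_nz x); rewrite disjoints1 in_set1 eq_sym nxy => /(_ erefl).
rewrite mem_cba1 negb_and negbK => /orP [nyx|//].
by have := tot x y; rewrite (negbTE nyx) orbF.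
Qed.

Lemma bb_step i x y : i.+1 < size bb -> x \in nth set0 bb i -> y \in nth set0 bb i.+1 ->
  le x y && ~~ le y x.
Proof.
move=> hi hx hy.
have [_ [_ [_ [cs _]]]] := hb.
have := cs i hi; rewrite inE => /andP [_ /existsP [a /andP [aB /forallP Ha]]].
have /andP [lay nlya] := implyP (Ha y) hy.
have lxa := bb_flat (ltnW hi) hx aB.
rewrite (tr lxa lay) /=.
apply/negP => lyx. by rewrite (tr lyx lxa) in nlya.
Qed.

Lemma bb_chain k i x y : i + k.+1 < size bb -> x \in nth set0 bb i ->
  y \in nth set0 bb (i + k.+1) -> le x y && ~~ le y x.
Proof.
elim: k y => [|k IH] y hi hx hy.
  rewrite addn1 in hi hy; exact: bb_step hi hx hy.
have [ne _] := hb.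
have hi' : i + k.+1 < size bb by lia.
case/set0Pn: (ne _ hi') => z hz.
have /andP [lxz nlzx] := IH z hi' hx hz.
rewrite addnS in hi hy.
have /andP [lzy nlyz] := bb_step hi hz hy.
rewrite (tr lxz lzy) /=.
apply/negP => lyx. by rewrite (tr lyx lxz) in nlyz.
Qed.

Lemma bb_lt i j x y : i < j -> j < size bb -> x \in nth set0 bb i ->
  y \in nth set0 bb j -> le x y && ~~ le y x.
Proof.
move=> hij hj hx.
have -> : j = i + (j - i.+1).+1 by lia.
move=> hy; apply: bb_chain hx hy; lia.
Qed.

Lemma bb_find v : let k := find (fun U => U :&: [set v] != set0) bb in
  k < size bb /\ v \in nth set0 bb k.
Proof.
cbv zeta.
have [_ [_ [un _]]] := hb.
have hh : has (fun U => U :&: [set v] != set0) bb.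
  have : v \in \bigcup_(U <- bb) U by rewrite un inE.
  rewrite bigcup_seq => /bigcupP [U Ub vU].
  apply/hasP; exists U => //; apply/set0Pn; exists v; by rewrite !inE vU eqxx.
split; first by rewrite -has_find.
have := nth_find set0 hh => /set0Pn [y /setIP [yB /set1P E]].
by rewrite E in yB.
Qed.

End BB.

Lemma supp_eq (le : rel W) (tot : total le) (tr : transitive le) w w' :
  le w w' -> le w' w -> supp (cba_of le) [set w] = supp (cba_of le) [set w'].
Proof.
move=> h1 h2.
have hb : is_backbone (cba_of le) (backbone (cba_of le)).
  apply: epsilon_spec. have [bb hbb] := exists_bb tot tr [set: W]. by exists bb.
rewrite /supp /=.
have := bb_find hb w; cbv zeta => -[k1 x1].
have := bb_find hb w'; cbv zeta => -[k2 x2].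
case: (ltngtP (find (fun U => U :&: [set w] != set0) (backbone (cba_of le)))
              (find (fun U => U :&: [set w'] != set0) (backbone (cba_of le)))) => h.
- have := bb_lt tot tr hb h k2 x1 x2. by rewrite h2 andbF.
- have := bb_lt tot tr hb h k1 x2 x1. by rewrite h1 andbF.
- by rewrite h.
Qed.

End Aux.

Theorem theorem4 (W : finType) (HW : 0 < #|W|)
  (bullet : brel W -> brel W -> brel W)
  (Hba : forall G1 G2, belief_algebra G1 -> belief_algebra G2 ->
           belief_algebra (bullet G1 G2))
  (RA1 : forall G1 G2, belief_algebra G1 -> belief_algebra G2 ->
           G2 \subset bullet G1 G2)
  (RA2 : forall G1 G2, belief_algebra G1 -> belief_algebra G2 ->
           exists Om : brel W, Om \subset G1 :|: G2 /\ bullet G1 G2 = Gen Om)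
  (RA3 : forall G1 G2, CBA G1 -> CBA G2 -> CBA (bullet G1 G2))
  (RA4 : forall G1 G2, CBA G1 -> CBA G2 -> forall w w' : W,
           supp G2 [set w] = supp G2 [set w'] ->
           (([set w], [set w']) \in bullet G1 G2 <-> ([set w], [set w']) \in G1))
  (G1 G2 : brel W) (H1 : CBA G1) (H2 : CBA G2) :
  bullet G1 G2 = Gen (Lambda G1 G2 :|: G2).
Proof.
have [le [tot [tr HG]]] := RA3 _ _ H1 H2.
have [le2 [tot2 [tr2 HG2]]] := H2.
have [le1 [tot1 [tr1 HG1]]] := H1.
change (bullet G1 G2 = cba_of le) in HG.
change (G2 = cba_of le2) in HG2.
change (G1 = cba_of le1) in HG1.
have ba1 : belief_algebra G1 by rewrite HG1; exact: cba_ba.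
have ba2 : belief_algebra G2 by rewrite HG2; exact: cba_ba.
have sub2 := RA1 _ _ ba1 ba2.
apply/eqP; rewrite eqEsubset; apply/andP; split.
- apply/subsetP => [[U V]]. rewrite HG inE /=.
  move=> /andP [dUV /existsP [w1 /andP [w1U /forallP Hw]]].
  apply: (Gen_ii (U:=[set w1]) (V:=V)); [| by rewrite sub1set | exact: subxx | exact: dUV].
  apply: gen_combine.
    apply/negP => w1V; by move/disjP: dUV => /(_ w1 w1U w1V).
  move=> w2 w2V. have /andP [l12 nl21] := implyP (Hw w2) w2V.
  case h21: (le2 w2 w1); last first.
    have hG2 : ([set w1],[set w2]) \in G2.
      rewrite HG2 mem_cba1 h21 andbT.
      by have := tot2 w1 w2; rewrite h21 orbF.
    by apply: Gen_base; rewrite inE hG2 orbT.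
  case h12: (le2 w1 w2); last first.
    have hG2 : ([set w2],[set w1]) \in G2 by rewrite HG2 mem_cba1 h21 h12.
    have := subsetP sub2 _ hG2; rewrite HG mem_cba1 => /andP [l21 _].
    by rewrite l21 in nl21.
  have hs : supp G2 [set w1] = supp G2 [set w2] by rewrite HG2; exact: supp_eq.
  have hG : ([set w1],[set w2]) \in bullet G1 G2 by rewrite HG mem_cba1 l12 nl21.
  have hG1 := (RA4 _ _ H1 H2 w1 w2 hs).1 hG.
  apply: Gen_base; rewrite inE; apply/orP; left; rewrite inE.
  apply/existsP; exists w1; apply/existsP; exists w2.
  by rewrite eqxx hG1 hs eqxx.
- apply: Gen_min.
    rewrite HG; apply: ba_closed; exact: cba_ba.
  apply/subsetP => p; rewrite inE => /orP [|].
    rewrite inE => /existsP [w /existsP [w' /and3P [/eqP -> hG1 /eqP hs]]].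
    exact: (RA4 _ _ H1 H2 w w' hs).2 hG1.
  by move/(subsetP sub2).
Qed.
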